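(* For $h\ge3$ the determinants satisfy $D_h-D_{h-1}+2z^3D_{h-2}-z^6D_{h-3}=0$. Moreover, with $z^3=t(1-t)^2$ and $W=\sqrt{4t-3t^2}$, for all $h\ge0$, \[ D_h=A r_1^h+Br_2^h+Cr_3^h, \] where $r_1=(t-1)^2$, $r_2=\tfrac t2(2-t+W)$, $r_3=\tfrac t2(2-t-W)$ are the roots of $X^3-X^2+2z^3X-z^6=0$, and \[ A=\frac{t-1}{3t-1},\qquad B=\frac{3t^2-4t-W}{(3t-1)(3t-4)},\qquad C=\frac{3t^2-4t+W}{(3t-1)(3t-4)}. \] (The identity holds as an identity of formal series in $t^{1/2}$, with $W=2t^{1/2}(1-3t/4)^{1/2}$.)
   Context: For $h\ge1$, $D_h=D_h(z)$ is the determinant of the $h\times h$ matrix $T_h$ (rows/columns indexed $0,\dots,h-1$) with entries $(T_h)_{p,p}=1$, $(T_h)_{p,p+1}=-2z$, $(T_h)_{p,p+2}=z^2$, $(T_h)_{p+1,p}=-z^2$, and all other entries $0$; $D_0=1$. (So $D_1=1$, $D_2=1-2z^3$.) *)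

(* Defs.v *)
From HB Require Import structures.
From mathcomp Require Import all_boot all_order all_algebra.
Set Implicit Arguments. Unset Strict Implicit. Unset Printing Implicit Defensive.
Import Order.TTheory GRing.Theory Num.Theory.
Local Open Scope ring_scope.

Definition Tmat (R : comPzRingType) (h : nat) (z : R) : 'M[R]_h :=
  \matrix_(p < h, q < h)
     if (q == p :> nat) then 1
     else if (q == p.+1 :> nat) then - (2%:R * z)
     else if (q == p.+2 :> nat) then z ^+ 2
     else if (p == q.+1 :> nat) then - (z ^+ 2)
     else 0.

(* D_h(z) = det T_h ; for h = 0 the empty determinant is 1, so D_0 = 1. *)
Definition D (R : comPzRingType) (h : nat) (z : R) : R := \det (Tmat h z).

(* Main.v *)
Require Import Defs.
From HB Require Import structures.
From mathcomp Require Import all_boot all_order all_algebra.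
From mathcomp Require Import ring.
Import Order.TTheory GRing.Theory Num.Theory.
Local Open Scope ring_scope.

Section Det.
Variable R : comPzRingType.
Variable z : R.

Definition Fm (h : nat) (a b c : R) : 'M[R]_h :=
  \matrix_(p < h, q < h)
    if (p == 0%N :> nat) then
      (if (q == 0%N :> nat) then a else if (q == 1%N :> nat) then b
       else if (q == 2%N :> nat) then c else 0)
    else if (q == p :> nat) then 1
     else if (q == p.+1 :> nat) then - (2%:R * z)
     else if (q == p.+2 :> nat) then z ^+ 2
     else if (p == q.+1 :> nat) then - (z ^+ 2)
     else 0.

Definition G h a b c := \det (Fm h a b c).

Lemma D_G h : D h z = G h 1 (- (2%:R * z)) (z ^+ 2).
Proof.
rewrite /D /G; congr (\det _); apply/matrixP => i j; rewrite !mxE.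
case: (i : nat) => [|p] //=.

Qed.

Lemma G1 a b c : G 1 a b c = a.
Proof. by rewrite /G [LHS](expand_det_row _ ord0) big_ord1 /cofactor det_mx00 !mxE /= expr0 !mulr1. Qed.

Lemma Gstep n a b c : G n.+2 a b c = a * D n.+1 z + z ^+ 2 * G n.+1 b c 0.
Proof.
rewrite /G (expand_det_col _ ord0) big_ord_recl big_ord_recl big1; last first.
  move=> i _; rewrite !mxE /=.
  by rewrite mul0r.
rewrite addr0 /cofactor !mxE /=.
rewrite expr0 mul1r.
have -> : row' ord0 (col' ord0 (Fm n.+2 a b c)) = Tmat n.+1 z.
  apply/matrixP => i j; rewrite !mxE /= /bump /=.
  by rewrite !add1n.
have -> : row' (lift ord0 ord0) (col' ord0 (Fm n.+2 a b c)) = Fm n.+1 b c 0.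
  apply/matrixP => i j; rewrite !mxE /= /bump /=.
  case: i => [[|i] Hi] /=; first by case: j => [[|[|[|j]]] Hj].
  by rewrite !add1n.
rewrite /D; congr (_ + _).
by rewrite expr1 mulN1r mulrN mulNr opprK.
Qed.
Lemma D0 : D 0 z = 1.
Proof. exact: det_mx00. Qed.

Lemma L0 n a : G n.+1 a 0 0 = a * D n z.
Proof.
elim: n a => [|m IH] a; first by rewrite G1 D0 mulr1.
by rewrite Gstep IH mul0r mulr0 addr0.
Qed.

Lemma Drec n : D n.+3 z = D n.+2 z - 2%:R * z ^+ 3 * D n.+1 z + z ^+ 6 * D n z.
Proof.
rewrite [LHS]D_G Gstep Gstep L0.
ring.
Qed.

Lemma D1 : D 1 z = 1.
Proof. by rewrite D_G G1. Qed.
Lemma D2 : D 2 z = 1 - 2%:R * z ^+ 3.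
Proof. rewrite D_G Gstep G1 D1; ring. Qed.
End Det.

Lemma part1 (R : comPzRingType) (z : R) (h : nat) : (3 <= h)%N ->
     D h z - D (h - 1)%N z + 2%:R * z ^+ 3 * D (h - 2)%N z - z ^+ 6 * D (h - 3)%N z = 0.
Proof.
case: h => [|[|[|n]]] // _.
rewrite !subSS !subn0 Drec.
ring.
Qed.

Lemma part2 (K : fieldType) (z t W : K) :
     [pchar K] =i pred0 ->
     z ^+ 3 = t * (1 - t) ^+ 2 ->
     W ^+ 2 = 4%:R * t - 3%:R * t ^+ 2 ->
     3%:R * t - 1 != 0 -> 3%:R * t - 4%:R != 0 ->
     let r1 := (t - 1) ^+ 2 in
     let r2 := t / 2%:R * (2%:R - t + W) in
     let r3 := t / 2%:R * (2%:R - t - W) in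
     let A := (t - 1) / (3%:R * t - 1) in
     let B := (3%:R * t ^+ 2 - 4%:R * t - W) /
              ((3%:R * t - 1) * (3%:R * t - 4%:R)) in
     let C := (3%:R * t ^+ 2 - 4%:R * t + W) /
              ((3%:R * t - 1) * (3%:R * t - 4%:R)) in
     (forall r, r \in [:: r1; r2; r3] ->
        r ^+ 3 - r ^+ 2 + 2%:R * z ^+ 3 * r - z ^+ 6 = 0) /\
     (forall h : nat, D h z = A * r1 ^+ h + B * r2 ^+ h + C * r3 ^+ h).
Proof.
move=> ch hz hW h1 h4 r1 r2 r3 A B C.
have two : (2%:R : K) != 0 by rewrite (pcharf0P _).1.
have four : (4%:R : K) != 0 by rewrite (pcharf0P _).1.
set s := 4%:R * t - 3%:R * t ^+ 2.
set sg := t * (2%:R - t).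
set pi := t ^+ 2 * (1 - t) ^+ 2.
have q2 : r2 ^+ 2 - sg * r2 + pi = 0.
  have -> : r2 ^+ 2 - sg * r2 + pi = t ^+ 2 / (2%:R ^+ 2) * (W ^+ 2 - s).
    by rewrite /r2 /sg /pi /s; field; rewrite four two.
  by rewrite hW subrr mulr0.
have q3 : r3 ^+ 2 - sg * r3 + pi = 0.
  have -> : r3 ^+ 2 - sg * r3 + pi = t ^+ 2 / (2%:R ^+ 2) * (W ^+ 2 - s).
    by rewrite /r3 /sg /pi /s; field; rewrite four two.
  by rewrite hW subrr mulr0.
have z6 : z ^+ 6 = (t * (1 - t) ^+ 2) ^+ 2 by rewrite -hz -exprM.
have cub : forall r, r ^+ 3 - r ^+ 2 + 2%:R * z ^+ 3 * r - z ^+ 6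
                     = (r - r1) * (r ^+ 2 - sg * r + pi).
  by move=> r; rewrite z6 hz /r1 /sg /pi; ring.
have roots : forall r, r \in [:: r1; r2; r3] ->
        r ^+ 3 - r ^+ 2 + 2%:R * z ^+ 3 * r - z ^+ 6 = 0.
  move=> r; rewrite !inE => /or3P [] /eqP ->; rewrite cub.
  - by rewrite subrr mul0r.
  - by rewrite q2 mulr0.
  - by rewrite q3 mulr0.
split => //.
have step : forall r n, r \in [:: r1; r2; r3] ->
   r ^+ n.+3 = r ^+ n.+2 - 2%:R * z ^+ 3 * r ^+ n.+1 + z ^+ 6 * r ^+ n.
  move=> r n /roots e.
  apply/eqP; rewrite -subr_eq0; apply/eqP; rewrite !exprSr.
  transitivity (r ^+ n * (r ^+ 3 - r ^+ 2 + 2%:R * z ^+ 3 * r - z ^+ 6)).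
    ring.
  by rewrite e mulr0.
have S1 : B * r2 + C * r3 = t * ((3%:R * t ^+ 2 - 4%:R * t) * (2%:R - t) - W ^+ 2)
                            / ((3%:R * t - 1) * (3%:R * t - 4%:R)).
  by rewrite /B /C /r2 /r3; field; rewrite two h1 h4.
have BC : B + C = 2%:R * (3%:R * t ^+ 2 - 4%:R * t) / ((3%:R * t - 1) * (3%:R * t - 4%:R)).
  by rewrite /B /C; field; rewrite h1 h4.
have f0 : D 0 z = A * r1 ^+ 0 + B * r2 ^+ 0 + C * r3 ^+ 0.
  rewrite D0 !expr0 !mulr1 -addrA BC /A; field; by rewrite h1 h4.
have f1 : D 1 z = A * r1 ^+ 1 + B * r2 ^+ 1 + C * r3 ^+ 1.
  rewrite D1 !expr1 -addrA S1 hW /A /r1; field; by rewrite h1 h4.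
have f2 : D 2 z = A * r1 ^+ 2 + B * r2 ^+ 2 + C * r3 ^+ 2.
  have -> : A * r1 ^+ 2 + B * r2 ^+ 2 + C * r3 ^+ 2 =
            A * r1 ^+ 2 + sg * (B * r2 + C * r3) - pi * (B + C).
    have e2 : r2 ^+ 2 = sg * r2 - pi by apply/eqP; rewrite -subr_eq0 -q2; apply/eqP; ring.
    have e3 : r3 ^+ 2 = sg * r3 - pi by apply/eqP; rewrite -subr_eq0 -q3; apply/eqP; ring.
    rewrite e2 e3; ring.
  rewrite D2 S1 BC hW hz /A /r1 /sg /pi; field; by rewrite h1 h4.
suff H : forall n, [/\ D n z = A * r1 ^+ n + B * r2 ^+ n + C * r3 ^+ n,
                      D n.+1 z = A * r1 ^+ n.+1 + B * r2 ^+ n.+1 + C * r3 ^+ n.+1 &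
                      D n.+2 z = A * r1 ^+ n.+2 + B * r2 ^+ n.+2 + C * r3 ^+ n.+2].
  by move=> h; case: (H h).
elim=> [|n [e0 e1 e2]]; first by split.
split => //.
rewrite Drec e0 e1 e2 (step r1) ?(step r2) ?(step r3) ?inE ?eqxx ?orbT //.
ring.
Qed.

Theorem mainTheorem3 :
  (* recurrence, as an identity valid for z in any commutative ring
     (in particular for the indeterminate z in Z[z]) *)
  (forall (R : comPzRingType) (z : R) (h : nat), (3 <= h)%N ->
     D h z - D (h - 1)%N z + 2%:R * z ^+ 3 * D (h - 2)%N z - z ^+ 6 * D (h - 3)%N z = 0)
  /\
  (* closed form, in any field of characteristic 0 containing z, t, W with
     z^3 = t(1-t)^2 and W^2 = 4t - 3t^2 (e.g. the field of formal Laurent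
     series in which the paper's identity lives) *)
  (forall (K : fieldType) (z t W : K),
     [pchar K] =i pred0 ->
     z ^+ 3 = t * (1 - t) ^+ 2 ->
     W ^+ 2 = 4%:R * t - 3%:R * t ^+ 2 ->
     3%:R * t - 1 != 0 -> 3%:R * t - 4%:R != 0 ->
     let r1 := (t - 1) ^+ 2 in
     let r2 := t / 2%:R * (2%:R - t + W) in
     let r3 := t / 2%:R * (2%:R - t - W) in
     let A := (t - 1) / (3%:R * t - 1) in
     let B := (3%:R * t ^+ 2 - 4%:R * t - W) /
              ((3%:R * t - 1) * (3%:R * t - 4%:R)) in
     let C := (3%:R * t ^+ 2 - 4%:R * t + W) /
              ((3%:R * t - 1) * (3%:R * t - 4%:R)) in
     (forall r, r \in [:: r1; r2; r3] ->
        r ^+ 3 - r ^+ 2 + 2%:R * z ^+ 3 * r - z ^+ 6 = 0) /\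
     (forall h : nat, D h z = A * r1 ^+ h + B * r2 ^+ h + C * r3 ^+ h)).
Proof.
split; first exact: part1.
exact: part2.
Qed.
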